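(* Let $t$ be a positive integer and let $M$ be a matroid with the $(t,2t)$-property. Then $M$ has no restriction isomorphic to the uniform matroid $U_{t,3t}$.
   Context: A matroid $M$ has the $(t,2t)$-property if every $t$-element subset of $E(M)$ is contained in both a $2t$-element circuit and a $2t$-element cocircuit of $M$. *)

(* Defs.v *)
From mathcomp Require Import all_boot.
Set Implicit Arguments. Unset Strict Implicit. Unset Printing Implicit Defensive.

Record matroid (T : finType) := Matroid {
  indep : {set T} -> bool;
  indep0 : indep set0;
  indep_sub : forall A B : {set T}, A \subset B -> indep B -> indep A;
  indep_aug : forall A B : {set T}, indep A -> indep B -> #|A| < #|B| ->
     exists2 x, x \in B :\: A & indep (x |: A)
}.

Section MatroidNotions.
Variables (T : finType) (M : matroid T).

Definition basis (B : {set T}) : Prop :=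
  indep M B /\ forall A : {set T}, B \subset A -> indep M A -> A = B.

Definition circuit (C : {set T}) : Prop :=
  ~~ indep M C /\ forall D : {set T}, D \proper C -> indep M D.

(* independent sets of the dual matroid M^*: sets avoiding some basis of M *)
Definition coindep (I : {set T}) : Prop :=
  exists B : {set T}, basis B /\ [disjoint I & B].

Definition cocircuit (C : {set T}) : Prop :=
  ~ coindep C /\ forall D : {set T}, D \proper C -> coindep D.

Definition t2t_property (t : nat) : Prop :=
  forall X : {set T}, #|X| = t ->
    (exists C : {set T}, [/\ circuit C, #|C| = 2 * t & X \subset C]) /\
    (exists D : {set T}, [/\ cocircuit D, #|D| = 2 * t & X \subset D]).

End MatroidNotions.

Definition uniform_indep (r n : nat) (Y : {set 'I_n}) : bool := #|Y| <= r.

(* M has a restriction isomorphic to U_{r,n}: there is an injection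
   f : 'I_n -> E(M) such that, for every Y, f(Y) is independent in M
   (equivalently in M|f('I_n)) iff Y is independent in U_{r,n}. *)
Definition has_uniform_restriction (T : finType) (M : matroid T) (r n : nat)
  : Prop :=
  exists f : 'I_n -> T, injective f /\
    forall Y : {set 'I_n}, indep M (f @: Y) = uniform_indep r Y.

(* Main.v *)
Require Import Defs.
From mathcomp Require Import all_boot zify.

Section Aux.
Variables (T : finType) (M : matroid T).

Lemma basis_card_max (B I : {set T}) : basis M B -> indep M I -> #|I| <= #|B|.
Proof.
move=> [iB mB] iI; rewrite leqNgt; apply/negP => lt.
have [x /setDP [xI xB] ix] := indep_aug iB iI lt.
have := mB (x |: B) (subsetUr _ _) ix.
move/setP/(_ x); rewrite !inE eqxx /= => h.
by rewrite -h in xB.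
Qed.

Lemma basis_of_card (B J : {set T}) : basis M B -> indep M J -> #|B| <= #|J| ->
  basis M J.
Proof.
move=> bB iJ le; split=> // A sJA iA.
apply/eqP; rewrite eq_sym eqEcard sJA /=.
have h1 := basis_card_max _ _ bB iA.
have h2 := leq_trans h1 le.
exact: h2.
Qed.

Lemma extend_indep (B : {set T}) : indep M B -> forall n (I : {set T}),
  #|B| - #|I| = n -> indep M I ->
  exists J : {set T}, [/\ indep M J, I \subset J, J \subset I :|: B & #|B| <= #|J|].
Proof.
move=> iB; elim=> [|n IH] I hn iI.
  exists I; split=> //; first exact: subsetUl.
  by move/eqP: hn; rewrite subn_eq0.
have lt : #|I| < #|B| by rewrite -subn_gt0 hn.
have [x /setDP [xB xI] ix] := indep_aug iI iB lt.
have cx : #|x |: I| = #|I|.+1 by rewrite cardsU1 xI.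
have hn' : #|B| - #|x |: I| = n by rewrite cx subnS hn.
have [J [iJ sJ1 sJ2 cJ]] := IH (x |: I) hn' ix.
exists J; split=> //.
  by apply: subset_trans sJ1; apply: subsetUr.
apply: (subset_trans sJ2); apply/subsetP => y; rewrite !inE.
by case/orP => [/orP [/eqP -> | ->]|->]; rewrite ?xB ?orbT.
Qed.

End Aux.

Theorem lemma5p2 (T : finType) (M : matroid T) (t : nat) :
  0 < t -> t2t_property M t -> ~ has_uniform_restriction M t (3 * t).
Proof.
move=> t0 ht [f [finj hf]].
have t3 : t < 3 * t by rewrite -{1}(mul1n t) ltn_mul2r t0.
pose S0 := [set i : 'I_(3 * t) | i < t].
have cS0 : #|S0| = t.
  have wi : injective (widen_ord (ltnW t3)) by move=> a b h; apply: val_inj; exact: (congr1 val h).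
  rewrite -[RHS](card_ord t) -(card_imset _ wi).
  apply: eq_card => i; rewrite inE; apply/idP/imsetP => [it|[j _ ->]] //=.
  by exists (Ordinal it) => //; apply: val_inj.
have cX : #|f @: S0| = t by rewrite card_imset.
have [_ [D [cD cardD XD]]] := ht (f @: S0) cX.
pose P := [set i | f i \in D].
have cP : #|P| <= 2 * t.
  rewrite -cardD -(card_imset _ finj); apply: subset_leq_card.
  by apply/subsetP => x /imsetP [i]; rewrite inE => h ->.
pose Zc := [set i | f i \notin D].
have cZc : t <= #|Zc|.
  have : #|P| + #|Zc| = 3 * t.
    rewrite -[RHS](card_ord (3 * t)) -(cardsC P); congr (_ + _).
    by apply: eq_card => i; rewrite !inE.
  lia.
have [s [us ss sZ]] := card_geqP cZc.
pose Y' := [set x in s].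
have cY' : #|Y'| = t by rewrite cardsE (card_uniqP us).
have Y'Z : forall i, i \in Y' -> f i \notin D.
  by move=> i; rewrite inE => /sZ; rewrite inE.
pose e0 : 'I_(3 * t) := Ordinal (leq_trans t0 (ltnW t3)).
have e0S : e0 \in S0 by rewrite inE.
pose e := f e0.
have eD : e \in D by apply: (subsetP XD); apply: imset_f.
have [ndD minD] := cD.
have [B [bB dB]] : coindep M (D :\ e).
  apply: minD; rewrite properE subD1set /=.
  by apply/subsetP => /(_ e eD); rewrite !inE eqxx.
have iY : indep M (f @: Y') by rewrite hf /uniform_indep cY'.
have [J [iJ sYJ sJ cJ]] := @extend_indep _ M _ (proj1 bB) _ _ erefl iY.
apply: ndD; exists J; split; first exact: (@basis_of_card _ M _ _ bB) iJ cJ.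
rewrite -setI_eq0; apply/eqP/setP => x; rewrite !inE; apply/negP => /andP [xD xJ].
have [xe|xne] := eqVneq x e.
  have e0Y : e0 \notin Y' by apply/negP => /Y'Z; rewrite eD.
  have : indep M (f @: (e0 |: Y')).
    apply: indep_sub iJ; rewrite imsetU1; apply/subsetP => y; rewrite !inE.
    by case/orP => [/eqP ->|/(subsetP sYJ)] //; rewrite -/e -xe.
  by rewrite hf /uniform_indep cardsU1 e0Y cY' ltnn.
move: (subsetP sJ x xJ); rewrite inE => /orP [/imsetP [i iYi xi]|xB].
  by move: (Y'Z i iYi); rewrite -xi xD.
by move/pred0P: dB => /(_ x) /=; rewrite !inE xne xD xB.
Qed.
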